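(* Let $n,k$ be positive integers with $n\ge k$. The integer $|u(n,k)|$ is the number of ordered pairs $(\sigma,\tau)$ of permutations of $[n]=\{1,\dots,n\}$, each having $k$ cycles, such that $\min(\sigma)=\min(\tau)$.
   Context: The central factorial numbers of the first kind with even indices $u(n,k)=t(2n,2k)$ satisfy $u(0,0)=1$, $u(n,k)=0$ if $k\notin\{1,\dots,n\}$ (for $(n,k)\ne(0,0)$), and $u(n,k)=u(n-1,k-1)-(n-1)^2u(n-1,k)$ for $n,k\ge1$; equivalently $\prod_{i=0}^{n-1}(x-i^2)=\sum_k u(n,k)x^k$. For a permutation $\sigma$ of $[n]$, $\min(\sigma)$ denotes the set of cyclic minima, i.e. the set of minimal elements of the cycles of $\sigma$. *)

(* Defs.v *)
From mathcomp Require Import all_boot all_order all_algebra all_fingroup.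
Set Implicit Arguments. Unset Strict Implicit. Unset Printing Implicit Defensive.
Import GRing.Theory Num.Theory.
Local Open Scope ring_scope.

(* Central factorial numbers with even indices: u n k = t(2n,2k).
   u(0,0)=1, u(0,k)=0 for k>=1, u(n,0)=0 for n>=1,
   u(n,k) = u(n-1,k-1) - (n-1)^2 u(n-1,k). *)
Fixpoint cfu (n k : nat) : int :=
  match n with
  | 0 => (k == 0%N)%:Z
  | n'.+1 => match k with
             | 0 => 0
             | k'.+1 => cfu n' k' - ((n' ^ 2)%N)%:Z * cfu n' k
             end
  end.

Definition cycmin (n : nat) (s : {perm 'I_n}) : {set 'I_n} :=
  [set x : 'I_n | [forall y in porbit s x, (x <= y)%N]].

Definition ncycles (n : nat) (s : {perm 'I_n}) : nat := #|porbits s|.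

(* Main.v *)
Require Import Defs.
From mathcomp Require Import all_boot all_order all_algebra all_fingroup.
From mathcomp Require Import zify ring.
Set Implicit Arguments. Unset Strict Implicit. Unset Printing Implicit Defensive.

Local Open Scope group_scope.
Section Perm.
Variable T : finType.
Implicit Types (s : {perm T}) (x y z i a : T).

Lemma porbit_closed s x z : z \in porbit s x -> s z \in porbit s x.
Proof.
by case/porbitP=> j ->; rewrite -permM -expgSr mem_porbit.
Qed.

Lemma porbit_fwd s' i a x : s' a = a -> x != a ->
  forall j, (s' ^+ j) x \in porbit (tperm i a * s') x.
Proof.
move=> sa xa; elim=> [|j IH]; first by rewrite expg0 perm1 porbit_id.
set s := tperm i a * s'.
have za : (s' ^+ j) x != a.
  apply: contraNneq xa => e; apply/eqP; apply: (@perm_inj _ (s' ^+ j)).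
  by rewrite e permX_fix.
rewrite expgSr permM.
have [zi|zi] := eqVneq ((s' ^+ j) x) i.
  have h1 : s ((s' ^+ j) x) = a by rewrite permM zi tpermL.
  have : s a \in porbit s x by rewrite -h1; do 2 apply: porbit_closed.
  by rewrite permM tpermR -zi.
have : s ((s' ^+ j) x) \in porbit s x by apply: porbit_closed.
by rewrite permM tpermD // eq_sym.
Qed.

Lemma porbit_bwd s' i a x : s' a = a -> x != a ->
  forall j, let z := ((tperm i a * s') ^+ j) x in
    (z \in porbit s' x) || ((z == a) && (i \in porbit s' x)).
Proof.
move=> sa xa; elim=> [|j IH] /=; first by rewrite expg0 perm1 porbit_id.
move: IH; set s := tperm i a * s'; set z := (s ^+ j) x => IH.
rewrite expgSr permM -/z.
case/orP: IH => [zin|/andP[/eqP za iin]].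
  have za : z != a.
    case/porbitP: zin => l e; apply: contraNneq xa => e2; apply/eqP.
    apply: (@perm_inj _ (s' ^+ l)); by rewrite -e e2 permX_fix.
  have [zi|zi] := eqVneq z i.
    by rewrite /s permM zi tpermL sa eqxx -zi zin orbT.
  by rewrite /s permM tpermD 1?eq_sym // porbit_closed.
by rewrite /s permM za tpermR porbit_closed.
Qed.

End Perm.

Lemma cycmin_tperm n (s' : {perm 'I_n}) (i a : 'I_n) : s' a = a -> (i < a)%N ->
  (forall y : 'I_n, (a <= y)%N -> s' y = y) ->
  cycmin (tperm i a * s') = cycmin s' :\ a.
Proof.
move=> sa ia fix'; set s := tperm i a * s'.
apply/setP => x; rewrite !inE.
have [->|xa] := eqVneq x a => /=.
  apply/negbTE/negP => /forall_inP h.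
  have : i \in porbit s a.
    by rewrite porbit_sym; have := mem_porbit s 1 i; rewrite expg1 /s permM tpermL sa.
  by move/h; rewrite leqNgt ia.
apply/forall_inP/forall_inP => h y yin.
  by case/porbitP: yin => j ->; apply: h; apply: porbit_fwd.
case/porbitP: yin => j ->.
case/orP: (porbit_bwd i sa xa j) => [yin'|/andP[/eqP -> iin]]; first exact: h.
case: (leqP x a) => // ax; exfalso.
have sx : s' x = x by apply: fix'; exact: ltnW.
case/porbitP: iin => l il; move: il; rewrite permX_fix // => il.
by move: ia ax; rewrite il; lia.
Qed.

Lemma ncycles_cycmin n (s : {perm 'I_n}) : ncycles s = #|cycmin s|.
Proof.
rewrite /ncycles.
have -> : porbits s = porbit s @: cycmin s.
  apply/setP => X; apply/imsetP/imsetP => [[x _ ->]|[x _ ->]]; last by exists x.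
  case: (@arg_minnP _ x (mem (porbit s x)) (fun y => val y) (porbit_id s x)) => y yin ymin.
  have e : porbit s x = porbit s y by apply/eqP; rewrite eq_porbit_mem porbit_sym.
  exists y => //; rewrite inE; apply/forall_inP => z zin.
  by apply: ymin; rewrite /= e.
rewrite card_in_imset // => x y xin yin e.
apply/val_inj/anti_leq; move: xin yin; rewrite !inE => /forall_inP hx /forall_inP hy.
by rewrite hx ?hy // ?e ?porbit_id // -e porbit_id.
Qed.

Section Count.
Variable n : nat.

Definition Pm (m : nat) : {set {perm 'I_n}} :=
  [set s : {perm 'I_n} | [forall y : 'I_n, (m <= y)%N ==> (s y == y)]].

Definition fm (m : nat) (S : {set 'I_n}) : nat :=
  ([forall y : 'I_n, (m <= y)%N ==> (y \in S)] * \prod_(y : 'I_n | y \notin S) y)%N.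

Lemma cycmin1 : cycmin (1 : {perm 'I_n}) = setT.
Proof.
apply/setP => x; rewrite !inE; apply/forall_inP => y.
by case/porbitP => j ->; rewrite expg1n perm1.
Qed.

Lemma fixed_cycmin (s : {perm 'I_n}) a : s a = a -> a \in cycmin s.
Proof.
move=> sa; rewrite inE; apply/forall_inP => y.
by case/porbitP => j ->; rewrite permX_fix.
Qed.

Lemma count0 S : #|[set s in Pm 0 | cycmin s == S]| = fm 0 S.
Proof.
have P0 : forall s : {perm 'I_n}, [forall y : 'I_n, (0 <= y)%N ==> (s y == y)] = (s == 1).
  move=> s; apply/forallP/eqP => [h|-> y]; last by rewrite perm1 eqxx.
  by apply/permP => y; rewrite perm1; apply/eqP; exact: (h y).
rewrite /fm; have [->|nS] := eqVneq S setT.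
  rewrite (_ : [forall y, _] = true); last by apply/forallP => y; rewrite inE.
  rewrite big_pred0 => [|y]; last by rewrite inE.
  rewrite (_ : [set s in Pm 0 | cycmin s == setT] = [set 1]) ?cards1 //.
  by apply/setP => s; rewrite !inE P0; case: eqP => // ->; rewrite cycmin1 eqxx.
rewrite (_ : [forall y, _] = false).
  apply/eqP; rewrite cards_eq0; apply/eqP/setP => s; rewrite !inE P0.
  by case: eqP => // ->; rewrite cycmin1 eq_sym (negbTE nS).
apply/negbTE/forallP => h; move/eqP: nS; apply; apply/setP => y.
by rewrite inE; exact: (h y).
Qed.

Lemma sum_split (m : nat) (a : 'I_n) X Y : val a = m ->
  (\sum_(i : 'I_n) (if (i <= m)%N then (if i == a then X else Y) else 0))%N = (X + m * Y)%N.
Proof.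
move=> am.
pose F := fun j : nat => if (j <= m)%N then (if j == m then X else Y) else 0%N.
rewrite (eq_bigr (fun i : 'I_n => F i)); last first.
  by move=> i _; rewrite /F -am -(inj_eq val_inj).
have mn : (m < n)%N by rewrite -am ltn_ord.
rewrite -(big_mkord xpredT F) (big_cat_nat _ (n:=m.+1)) //=.
have -> : (\sum_(m.+1 <= i < n) F i = 0)%N.
  by rewrite big_nat_cond big1 // => i /andP[/andP[h _] _]; rewrite /F leqNgt h.
rewrite addn0.
rewrite big_nat_recr //= {2}/F leqnn eqxx.
rewrite big_nat_cond (eq_bigr (fun _ => Y)); last first.
  by move=> i /andP[/andP[_ h] _]; rewrite /F ltnW // ltn_eqF.
by rewrite -big_nat_cond sum_nat_const_nat subn0 addnC mulnC.
Qed.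

Lemma hfix (s : {perm 'I_n}) m : [forall y : 'I_n, (m <= y)%N ==> (s y == y)] ->
  forall y : 'I_n, (m <= y)%N -> s y = y.
Proof. by move/forallP => h y my; apply/eqP; exact: (implyP (h y)). Qed.

Lemma fm_step m (a : 'I_n) S : val a = m ->
  (fm m S + m * ((a \notin S) * fm m (a |: S)))%N = fm m.+1 S.
Proof.
move=> am; rewrite /fm.
have [aS|aS] := boolP (a \in S) => /=.
  rewrite mul0n muln0 addn0; congr (_ * _)%N; congr nat_of_bool.
  apply/forallP/forallP => h y; apply/implyP => hy.
    by apply: (implyP (h y)); lia.
  have [->//|ya] := eqVneq y a.
  apply: (implyP (h y)); move: ya; rewrite -(inj_eq val_inj) am /=; lia.
rewrite (_ : [forall y : 'I_n, (m <= y)%N ==> (y \in S)] = false); last first.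
  by apply/negbTE/forallP => /(_ a); rewrite /= am leqnn (negbTE aS).
rewrite mul0n add0n mul1n.
rewrite (_ : [forall y : 'I_n, (m <= y)%N ==> (y \in a |: S)] =
             [forall y : 'I_n, (m.+1 <= y)%N ==> (y \in S)]); last first.
  apply/forallP/forallP => h y; apply/implyP => hy.
    have := implyP (h y); rewrite in_setU1.
    have ya : y != a by rewrite -(inj_eq val_inj) am /=; lia.
    by rewrite (negbTE ya) /=; apply; lia.
  rewrite in_setU1; have [//|ya] := eqVneq y a.
  apply: (implyP (h y)); move: ya; rewrite -(inj_eq val_inj) am /=; lia.
rewrite [in RHS](bigD1 a) //= am mulnCA; congr (_ * (_ * _))%N.
by apply: eq_bigl => y; rewrite in_setU1 negb_or andbC.
Qed.

Lemma count_step m (mn : (m < n)%N) S :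
  (forall S, #|[set s in Pm m | cycmin s == S]| = fm m S) ->
  #|[set s in Pm m.+1 | cycmin s == S]| = fm m.+1 S.
Proof.
move=> IH; set a : 'I_n := Ordinal mn.
set A := [set s in Pm m.+1 | cycmin s == S].
have step1 : #|A| = (\sum_(i : 'I_n) #|[set s in A | (s^-1)%g a == i]|)%N.
  rewrite -sum1_card (partition_big (fun s : {perm 'I_n} => (s^-1)%g a) predT) //=.
  by apply: eq_bigr => i _; rewrite -sum1_card; apply: eq_bigl => s; rewrite inE.
have step2 : forall i : 'I_n, #|[set s in A | (s^-1)%g a == i]| =
    if (i <= m)%N then #|[set s' in Pm m | cycmin (tperm i a * s') == S]| else 0%N.
  move=> i; case: leqP => im.
    rewrite -[RHS](card_imset _ (can_inj (tpermKg i a))).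
    apply: eq_card => s; rewrite !inE; apply/idP/imsetP.
      case/andP => /andP[sP cS] /eqP si.
      exists (tperm i a * s); last by rewrite tpermKg.
      rewrite !inE tpermKg cS andbT; apply/forallP => y; apply/implyP => my.
      rewrite permM; have [ya|ya] := eqVneq y a.
        by rewrite ya tpermR -si permKV eqxx.
      have my' : (m.+1 <= y)%N by move: ya; rewrite -(inj_eq val_inj) /=; lia.
      rewrite tpermD; last by rewrite eq_sym.
        by rewrite (hfix sP my').
      by rewrite -(inj_eq val_inj) /=; lia.
    case=> s' /[!inE] /andP[s'P cS] ->.
    have e : (tperm i a * s') i = a by rewrite permM tpermL (hfix s'P) //=.
    rewrite cS andbT (canLR (permK _) (esym e)) eqxx andbT.
    apply/forallP => y; apply/implyP => my.
    rewrite permM tpermD.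
        by rewrite (hfix s'P) //; lia.
      by rewrite -(inj_eq val_inj) /=; lia.
    by rewrite -(inj_eq val_inj) /=; lia.
  apply/eqP; rewrite cards_eq0; apply/eqP/setP => s; rewrite !inE.
  apply/negbTE/andP => [[/andP[sP _] /eqP si]].
  have := permKV s a; rewrite si (hfix sP) // => ia.
  by move: im; rewrite ia /=; lia.
have step3 : forall i : 'I_n, (i <= m)%N ->
    #|[set s' in Pm m | cycmin (tperm i a * s') == S]| =
    if i == a then fm m S else ((a \notin S) * fm m (a |: S))%N.
  move=> i im; case: eqP => [->|ia].
    by rewrite -IH; apply: eq_card => s'; rewrite !inE tperm1 mul1g.
  have ia' : (i < a)%N.
    by move/eqP: ia; rewrite -(inj_eq val_inj) /=; lia.
  rewrite -IH.
  have key : forall s' : {perm 'I_n}, [forall y : 'I_n, (m <= y)%N ==> (s' y == y)] ->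
      cycmin (tperm i a * s') = cycmin s' :\ a.
    move=> s' s'P; apply: cycmin_tperm => //; first exact: (hfix s'P).
    by move=> y ay; apply: (hfix s'P).
  have [aS|aS] := boolP (a \in S) => /=.
    rewrite mul0n; apply/eqP; rewrite cards_eq0; apply/eqP/setP => s'; rewrite !inE.
    apply/negbTE/andP => [[s'P /eqP e]].
    by move: aS; rewrite -e key // !inE eqxx.
  rewrite mul1n; apply: eq_card => s'; rewrite !inE.
  case s'P : [forall y : 'I_n, (m <= y)%N ==> (s' y == y)] => //=.
  have aC : a \in cycmin s' by apply: fixed_cycmin; exact: (hfix s'P).
  rewrite key //; apply/eqP/eqP => [<-|->]; first by rewrite setD1K.
  by rewrite setU1K.
rewrite step1 (eq_bigr _ (fun i _ => step2 i)).
rewrite (eq_bigr (fun i : 'I_n => if (i <= m)%N then (if i == a then fm m S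
              else ((a \notin S) * fm m (a |: S))%N) else 0%N)); last first.
  by move=> i _; case: leqP => // im; rewrite step3.
by rewrite sum_split // fm_step.
Qed.

Lemma count_all S : #|[set s : {perm 'I_n} | cycmin s == S]| = (\prod_(y : 'I_n | y \notin S) y)%N.
Proof.
have h : forall m, (m <= n)%N -> forall S, #|[set s in Pm m | cycmin s == S]| = fm m S.
  elim=> [_|m IH mn] S0; first exact: count0.
  by apply: count_step => //; apply: IH; exact: ltnW.
have := h n (leqnn n) S; rewrite /fm.
rewrite (_ : [forall y : 'I_n, (n <= y)%N ==> (y \in S)] = true); last first.
  by apply/forallP => y; rewrite leqNgt ltn_ord.
rewrite mul1n => <-; apply: eq_card => s; rewrite !inE.
rewrite (_ : [forall y : 'I_n, (n <= y)%N ==> (s y == y)] = true) //.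
by apply/forallP => y; rewrite leqNgt ltn_ord.
Qed.

End Count.

Section Alg.
Local Open Scope ring_scope.
Import GRing.Theory Num.Theory.
Definition cpoly (n : nat) : {poly int} :=
  \prod_(i < n) ('X - (((i : nat) ^ 2)%N%:Z)%:P).

Lemma cfu_coef n k : cfu n k = (cpoly n)`_k.
Proof.
elim: n k => [|n IH] k.
  by rewrite /cpoly big_ord0 coef1 /=; case: k.
rewrite /cpoly big_ord_recr /= -/(cpoly n) mulrBr coefB coefMX coefMC.
case: k => [|k] /=.
  rewrite -IH; case: n {IH} => [|n] /=; by rewrite ?mulr0 ?mul0r subrr.
by rewrite !IH mulrC.
Qed.

Lemma cpoly_expand n k : (k <= n)%N ->
  (cpoly n)`_k = (-1) ^+ (n - k)%N *
    \sum_(I in {set 'I_n} | #|I| == (n - k)%N)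
        \prod_(i in I) (((i : nat) ^ 2)%N%:Z).
Proof.
move=> nle; rewrite /cpoly.
under eq_bigr => i _ do rewrite addrC -raddfN/=.
rewrite bigA_distr /= coef_sum.
transitivity (\sum_(I in {set 'I_n}) if #|I| == (n - k)%N then
                  \prod_(i < n | i \in I) - (((i : nat) ^ 2)%N%:Z) else 0).
  apply eq_bigr => I _.
  rewrite big_if/= big_const iter_mulr_1 -rmorph_prod/= coefCM coefXn.
  rewrite -[#|I| == _](eqn_add2r k) subnK//.
  rewrite -[X in (_ + _)%N == X]card_ord -(cardC I) eqn_add2l.
  by case: ifP; rewrite ?mulr1 ?mulr0.
by rewrite -big_mkcond mulr_sumr/=; apply: eq_bigr => I /eqP <-; rewrite prodrN.
Qed.

Lemma cfu_abs n k : (k <= n)%N ->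
  `|cfu n k|%N = (\sum_(S : {set 'I_n} | #|S| == k) \prod_(i | i \notin S) ((i : nat) ^ 2))%N.
Proof.
move=> kn; rewrite cfu_coef cpoly_expand // abszMsign.
rewrite (reindex_inj (@setC_inj _)) /=.
rewrite (eq_bigl (fun S : {set 'I_n} => #|S| == k)); last first.
  move=> S; rewrite -(eqn_add2l #|S|) cardsC card_ord.
  by apply/eqP/eqP => [|->]; lia.
rewrite (eq_bigr (fun S : {set 'I_n} => ((\prod_(i0 < n | i0 \notin S) (i0^2)%N)%N)%:R)); last first.
  move=> S _; rewrite natr_prod; apply: eq_big => [i|i _]; [by rewrite in_setC | by rewrite natz].
by rewrite -(natr_sum int) natz absz_nat.
Qed.
End Alg.

Theorem corollary17 (n k : nat) (hk : (0 < k)%N) (hkn : (k <= n)%N) :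
  `|cfu n k|%N =
  #|[set p : {perm 'I_n} * {perm 'I_n} |
      [&& ncycles p.1 == k, ncycles p.2 == k & cycmin p.1 == cycmin p.2]]|.
Proof.
rewrite cfu_abs // -sum1_card.
rewrite (partition_big (fun p : {perm 'I_n} * {perm 'I_n} => cycmin p.1) (fun S => #|S| == k)); last first.
  by move=> p; rewrite inE -ncycles_cycmin => /and3P[].
apply: eq_bigr => S /eqP Sk.
transitivity #|setX [set s : {perm 'I_n} | cycmin s == S] [set s : {perm 'I_n} | cycmin s == S]|.
  rewrite cardsX !count_all -big_split /=.
  by apply: eq_bigr => i _; rewrite mulnn.
rewrite -sum1_card; apply: eq_bigl => p; rewrite !inE !ncycles_cycmin.
case: (eqVneq (cycmin p.1) S) => [e1|]; last by rewrite andbF.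
rewrite e1 Sk eqxx andbT /=.
by case: (eqVneq (cycmin p.2) S) => [->|ne]; rewrite ?Sk ?eqxx ?andbF.
Qed.
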